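(* Let $G$ be a finite simple graph without isolated vertices. Then the non-cover complex $\mathcal{NC}(G)$ is $(|V(G)|-i\gamma(G)-1)$-collapsible.
   Context: For a finite simple graph $G$, a cover of $G$ is a set $W\subseteq V(G)$ such that $V(G)\setminus W$ is an independent set (i.e. $W$ contains an endpoint of every edge). The non-cover complex $\mathcal{NC}(G)$ is the simplicial complex on $V(G)$ whose faces are all sets $W\subseteq V(G)$ that are not covers of $G$ (equivalently, $V(G)\setminus W$ contains both endpoints of some edge). For $A,D\subseteq V(G)$, $D$ dominates $A$ if every $v\in A$ has a neighbor in $D$; $\gamma(G;A)$ is the minimum size of a set dominating $A$. The independent domination number is $i\gamma(G)=\max\{\gamma(G;I): I \text{ an independent set of } G\}$ (with $i\gamma(G)=\infty$ if $G$ has an isolated vertex). For a finite simplicial complex $X$, a face $\sigma$ is free if exactly one facet of $X$ contains $\sigma$; an elementary $d$-collapse deletes all faces containing a given free face of size at most $d$; $X$ is $d$-collapsible if the void complex can be obtained from $X$ by a finite sequence of elementary $d$-collapses. *)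

(* Defs.v *)
From mathcomp Require Import all_boot.
Set Implicit Arguments. Unset Strict Implicit. Unset Printing Implicit Defensive.

Definition simple_graph (T : finType) (e : rel T) : Prop :=
  symmetric e /\ irreflexive e.

Section Graphs.
Variables (T : finType) (e : rel T).

Definition no_isolated : Prop := forall v : T, exists u : T, e v u.

Definition is_cover (W : {set T}) : bool :=
  [forall u, forall v, e u v ==> ((u \in W) || (v \in W))].

Definition non_cover_complex : {set {set T}} := [set W | ~~ is_cover W].

Definition independent (I : {set T}) : bool :=
  [forall u in I, forall v in I, ~~ e u v].

Definition dominates (D A : {set T}) : bool :=
  [forall v in A, exists u in D, e v u].

(* gamma(G;A); value #|T|.+1 plays the role of infinity (no dominating set) *)
Definition gammaA (A : {set T}) : nat :=
  \big[minn/#|T|.+1]_(D : {set T} | dominates D A) #|D|.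

(* independent domination number (finite under the no-isolated-vertex hyp.) *)
Definition indep_dom : nat := \max_(I : {set T} | independent I) gammaA I.
End Graphs.

Section Complexes.
Variable T : finType.
Implicit Types (X : {set {set T}}) (s t : {set T}).

Definition is_facet X t : bool :=
  (t \in X) && [forall u in X, (t \subset u) ==> (u == t)].

Definition is_free_face X s : bool :=
  (s \in X) && (#|[set t in X | is_facet X t && (s \subset t)]| == 1).

Definition collapse_at X s : {set {set T}} := [set t in X | ~~ (s \subset t)].

Inductive elem_collapse (d : nat) X : {set {set T}} -> Prop :=
  | ElemCollapse s : is_free_face X s -> #|s| <= d ->
      elem_collapse d X (collapse_at X s).

Inductive d_collapsible (d : nat) : {set {set T}} -> Prop :=
  | dcoll_void : d_collapsible d set0
  | dcoll_step X Y : elem_collapse d X Y -> d_collapsible d Y -> d_collapsible d X.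
End Complexes.

(* Main.v *)
Require Import Defs.
From mathcomp Require Import all_boot zify.
Set Implicit Arguments. Unset Strict Implicit. Unset Printing Implicit Defensive.

Section LD.
Variable T : finType.
Implicit Types (X : {set {set T}}) (s t W : {set T}) (v : T).

Definition lk X v := [set W : {set T} | (v \notin W) && (v |: W \in X)].
Definition del X v := [set W in X | v \notin W].

Lemma lk_void X v : lk X v = set0 -> X = del X v.
Proof.
move=> H; apply/setP => W; rewrite !inE.
case: (boolP (v \in W)) => vW; last by rewrite andbT.
rewrite andbF; apply/negbTE/negP => WX.
have : W :\ v \in lk X v by rewrite inE setD11 /= setD1K.
by rewrite H inE.
Qed.

Lemma facet_lk_X X v G : is_facet (lk X v) G -> is_facet X (v |: G).
Proof.
case/andP; rewrite inE => /andP [vG GX] /forallP Hf.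
rewrite /is_facet GX /=; apply/forallP => u; apply/implyP => uX; apply/implyP => Gu.
have vu : v \in u by apply: (subsetP Gu); exact: setU11.
have ulk : u :\ v \in lk X v by rewrite inE setD11 /= setD1K.
have Gu' : G \subset u :\ v.
  by rewrite subsetD1 vG andbT; apply: subset_trans Gu; exact: subsetUr.
have := Hf (u :\ v); rewrite ulk Gu' /= => /eqP <-.
by rewrite setD1K.
Qed.

Lemma facet_X_lk X v t : v \in t -> is_facet X t -> is_facet (lk X v) (t :\ v).
Proof.
move=> vt /andP [tX /forallP Hf].
rewrite /is_facet inE setD11 setD1K //= tX /=.
apply/forallP => u; apply/implyP; rewrite inE => /andP [vu uX]; apply/implyP => tu.
have tu' : t \subset v |: u.
  by rewrite -(setD1K vt); apply: setUS.
have := Hf (v |: u); rewrite uX tu' /= => /eqP E.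
by rewrite -E setU1K.
Qed.

Lemma free_lift X v s : v \notin s -> is_free_face (lk X v) s -> is_free_face X (v |: s).
Proof.
move=> vs /andP [slk /cards1P [G HG]].
have : G \in [set t in lk X v | is_facet (lk X v) t && (s \subset t)] by rewrite HG set11.
rewrite inE => /andP [Glk /andP [fG sG]].
rewrite /is_free_face.
move: (slk); rewrite inE => /andP [_ ->] /=.
apply/cards1P; exists (v |: G); apply/setP => t; rewrite !inE.
apply/idP/idP.
- case/andP => tX /andP [ft st].
  have vt : v \in t by apply: (subsetP st); exact: setU11.
  have : t :\ v \in [set t in lk X v | is_facet (lk X v) t && (s \subset t)].
    rewrite inE (facet_X_lk vt ft) /= subsetD1 vs andbT; apply/andP; split.
      by rewrite inE setD11 setD1K.
    by apply: subset_trans st; exact: subsetUr.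
  by rewrite HG inE => /eqP <-; rewrite setD1K.
- move/eqP => ->; move: (Glk); rewrite inE => /andP [_ ->] /=.
  by rewrite facet_lk_X //=; apply: setUS.
Qed.

Lemma collapse_lk X v s : v \notin s ->
  lk (collapse_at X (v |: s)) v = collapse_at (lk X v) s.
Proof.
move=> vs; apply/setP => W; rewrite !inE.
case: (boolP (v \in W)) => //= vW.
congr (_ && _).
apply/idP/idP => H; apply: contra H => H.
- by apply: setUS.
- apply/subsetP => x xs; have := subsetP H x; rewrite !inE xs orbT => /(_ isT).
  case/orP => // /eqP xv; by move: vs; rewrite -xv xs.
Qed.

Lemma collapse_del X v s : del (collapse_at X (v |: s)) v = del X v.
Proof.
apply/setP => W; rewrite !inE.
case: (boolP (v \in W)) => vW; rewrite ?andbF ?andbT //.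
case: (W \in X); rewrite ?andbT //=.
apply/negP => /subsetP /(_ v (setU11 _ _)); by rewrite (negbTE vW).
Qed.

Lemma LD d L : d_collapsible d L -> forall X v, lk X v = L ->
  d_collapsible d.+1 (del X v) -> d_collapsible d.+1 X.
Proof.
elim => [|L0 L1 [s fs ss] _ IH] X v HL Hdel.
- by rewrite (lk_void HL).
- have vs : v \notin s.
    move: fs; rewrite /is_free_face -HL inE => /andP [/andP [vs _] _].
    exact: vs.
  apply: (dcoll_step (Y := collapse_at X (v |: s))).
    apply: ElemCollapse; first by apply: free_lift; rewrite // HL.
    by rewrite cardsU1 vs add1n.
  apply: (IH _ v); first by rewrite collapse_lk // HL.
  by rewrite collapse_del.
Qed.

Lemma simplex_coll d (U : {set T}) : d_collapsible d [set W : {set T} | W \subset U].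
Proof.
apply: (dcoll_step (Y := collapse_at [set W : {set T} | W \subset U] set0)).
  apply: ElemCollapse; last by rewrite cards0.
  rewrite /is_free_face inE sub0set /=; apply/cards1P; exists U.
  apply/setP => t; rewrite !inE sub0set andbT /is_facet inE.
  apply/idP/idP.
  - case/and3P => tU _ /forallP H.
    by have := H U; rewrite inE subxx tU /= eq_sym.
  - move/eqP => ->; rewrite subxx /=; apply/forallP => u; rewrite inE.
    apply/implyP => uU; apply/implyP => Uu; by rewrite eqEsubset uU Uu.
have -> : collapse_at [set W : {set T} | W \subset U] set0 = set0.
  by apply/setP => t; rewrite !inE sub0set andbF.
exact: dcoll_void.
Qed.
End LD.

Section Main.
Variables (T : finType) (e : rel T).
Hypothesis esym : symmetric e.
Hypothesis eirr : irreflexive e.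
Implicit Types (V A I D W : {set T}) (v : T).

Definition NI (A S : {set T}) : bool :=
  [exists u in S, (u \in A) || [exists w in S, e u w]].
Definition Xc (V A : {set T}) : {set {set T}} :=
  [set W : {set T} | (W \subset V) && NI A (V :\: W)].
Definition nonisol (V A : {set T}) : {set T} :=
  [set u in V | (u \in A) || [exists w in V, e u w]].
Definition valid (V A I : {set T}) : bool :=
  (I \subset V) && [forall u in I, [&& u \notin A, [exists w in V, e u w] &
     [forall w in I, ~~ e u w]]].
Definition Hyp (V A I : {set T}) (d : nat) := forall D : {set T}, D \subset V -> dominates e D I ->
  #|nonisol V A| <= d + #|D| + 1.

Lemma lk_Xc V A v : v \in V -> lk (Xc V A) v = Xc (V :\ v) A.
Proof.
move=> vV; apply/setP => W; rewrite !inE subUset sub1set vV subsetD1 /=.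
case: (boolP (v \in W)) => vW; rewrite ?andbF ?andbT //=.
congr (_ && NI A _); apply/setP => x; rewrite !inE.
by case: (x == v); case: (x \in W).
Qed.

Lemma del_Xc_loop V A v : v \in V -> v \in A ->
  del (Xc V A) v = [set W : {set T} | W \subset V :\ v].
Proof.
move=> vV vA; apply/setP => W; rewrite !inE subsetD1.
case: (boolP (v \in W)) => vW; rewrite ?andbF ?andbT //=.
case: (W \subset V) => //=.
apply/existsP; exists v; by rewrite !inE vW vV vA.
Qed.

Lemma del_Xc V A v : v \in V -> v \notin A ->
  del (Xc V A) v = Xc (V :\ v) (A :|: [set w | e v w]).
Proof.
move=> vV vA; apply/setP => W; rewrite !inE subsetD1.
case: (boolP (v \in W)) => vW; rewrite ?andbF ?andbT //=.
case: (W \subset V) => //=.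
apply/idP/idP.
- case/existsP => u; rewrite !inE => /andP [/andP [uW uV] /orP [uA|/existsP [w]]].
  + have uv : u != v by apply/eqP => E; move: vA; rewrite -E uA.
    apply/existsP; exists u; by rewrite !inE uW uV uA uv.
  + rewrite !inE => /andP [/andP [wW wV] euw].
    case: (eqVneq u v) => [uv|uv].
    * subst u; have wv : w != v by apply/eqP => E; move: euw; rewrite E eirr.
      apply/existsP; exists w; by rewrite !inE wW wV euw wv orbT.
    * apply/existsP; exists u; rewrite !inE uW uV uv /=.
      case: (eqVneq w v) => [wv|wv].
      - by subst w; rewrite esym euw orbT.
      - apply/orP; right; apply/existsP; exists w; by rewrite !inE wv wW wV euw.
- case/existsP => u; rewrite !inE => /andP [/and3P [uW uv uV] /orP [/orP [uA|evu]|/existsP [w]]].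
  + apply/existsP; exists u; by rewrite !inE uW uV uA.
  + apply/existsP; exists v; rewrite !inE vW vV /=; apply/orP; right.
    apply/existsP; exists u; by rewrite !inE uW uV evu.
  + rewrite !inE => /andP [/and3P [wW wv wV] euw].
    apply/existsP; exists u; rewrite !inE uW uV /=; apply/orP; right.
    apply/existsP; exists w; by rewrite !inE wW wV euw.
Qed.


Lemma validP V A I u : valid V A I -> u \in I ->
  [/\ u \in V, u \notin A, exists2 w, w \in V & e u w & forall w, w \in I -> ~~ e u w].
Proof.
case/andP => IV /forallP H uI; have := H u; rewrite uI /= => /and3P [uA /existsP [w /andP [wV euw]] /forallP Hi].
split => //; first exact: (subsetP IV).
- by exists w.
- by move=> x xI; have := Hi x; rewrite xI.
Qed.

Lemma nonvoid V A I W : W \in Xc V A -> valid V A I ->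
  exists2 D : {set T}, (D \subset V) && dominates e D I & #|D| < #|nonisol V A|.
Proof.
rewrite inE => /andP [_ /existsP [u /andP [uVW Hu]]] hI.
move: uVW; rewrite inE => /andP [_ uV].
have n1 : 0 < #|nonisol V A|.
  apply/card_gt0P; exists u; rewrite inE uV /=.
  case/orP: Hu => [-> //|/existsP [w /andP [wVW euw]]].
  apply/orP; right; apply/existsP; exists w; move: wVW; rewrite inE => /andP [_ ->]; by [].
case: (set_0Vmem I) => [I0|[x xI]].
  exists set0; last by rewrite cards0.
  rewrite sub0set /= I0 /dominates; apply/forallP => y; by rewrite inE.
exists (nonisol V A :\: I).
  apply/andP; split.
    apply/subsetP => y; by rewrite !inE => /andP [_ /andP [->]].
  apply/forallP => y; apply/implyP => yI.
  have [yV yA [w wV eyw] yind] := validP hI yI.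
  apply/existsP; exists w; rewrite !inE wV eyw /= andbT.
  apply/andP; split; first by apply/negP => wI; move: (yind w wI); rewrite eyw.
  apply/orP; right; apply/existsP; exists y; by rewrite yV esym.
have [xV xA [w wV exw] _] := validP hI xI.
have xS : x \in nonisol V A.
  rewrite inE xV /=; apply/orP; right; apply/existsP; exists w; by rewrite wV.
have sub : nonisol V A :\: I \subset nonisol V A :\ x.
  apply/subsetP => y; rewrite !inE => /andP [yI ->]; rewrite andbT.
  by apply: contraNneq yI => ->.
have := subset_leq_card sub; rewrite (cardsD1 x (nonisol V A)) xS.
move=> h; apply: leq_ltn_trans h _; by rewrite add1n ltnSn.
Qed.

Lemma nonisol_sub V A v : nonisol (V :\ v) A \subset nonisol V A :\ v.
Proof.
apply/subsetP => x; rewrite !inE => /andP [/andP [xv xV] H]; rewrite xv xV /=.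
case/orP: H => [-> //|/existsP [w]]; rewrite !inE => /andP [/andP [_ wV] exw].
apply/orP; right; apply/existsP; exists w; by rewrite wV.
Qed.

Lemma link_step V A I d v : v \in V -> v \notin I -> v \in nonisol V A ->
  valid V A I -> Hyp V A I d ->
  valid (V :\ v) A [set u in I | [exists w in V :\ v, e u w]] /\
  (forall D : {set T}, D \subset V :\ v -> dominates e D [set u in I | [exists w in V :\ v, e u w]] ->
     #|nonisol (V :\ v) A| <= d + #|D|).
Proof.
move=> vV vI vS hI hH.
set I' := [set u in I | _].
have I'I : I' \subset I by apply/subsetP => u; rewrite inE => /andP [].
split.
  apply/andP; split.
    apply/subsetP => u; rewrite inE => /andP [uI _].
    have [uV _ _ _] := validP hI uI; rewrite !inE uV andbT.
    by apply: contraNneq vI => <-.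
  apply/forallP => u; apply/implyP; rewrite inE => /andP [uI ex].
  have [_ uA _ ind] := validP hI uI; rewrite uA ex /=.
  apply/forallP => w; apply/implyP; rewrite inE => /andP [wI _]; exact: ind.
move=> D DV dD.
have DV' : D \subset V by apply: subset_trans DV (subD1set _ _).
have vD : v \notin D by apply/negP => /(subsetP DV); rewrite setD11.
have c1 := cardsD1 v (nonisol V A); rewrite vS in c1.
have ns := subset_leq_card (nonisol_sub V A v).
case: (eqVneq I' I) => [EI|NEI].
  have := hH D DV'; rewrite -EI => /(_ dD); lia.
have : ~~ (I \subset I').
  by apply: contra NEI => h; rewrite eqEsubset I'I h.
case/subsetPn => u uI uI'.
have [uV uA [w wV euw] _] := validP hI uI.
have uS : u \in nonisol V A :\ v.
  rewrite in_setD1 inE uV (negbTE uA) /=; apply/andP; split; first by apply: contraNneq vI => <-.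
  apply/existsP; exists w; by rewrite wV.
have c2 := cardsD1 u (nonisol V A :\ v); rewrite uS in c2.
have sub2 : nonisol (V :\ v) A \subset (nonisol V A :\ v) :\ u.
  apply/subsetP => x xS; rewrite in_setD1 (subsetP (nonisol_sub V A v)) // andbT.
  apply: contraTneq xS => ->; apply/negP; rewrite inE => /andP [_ /orP [uA'|ex]].
    by rewrite uA' in uA.
  by move: uI'; rewrite inE uI ex.
have ns2 := subset_leq_card sub2.
have dD2 : dominates e (v |: D) I.
  apply/forallP => x; apply/implyP => xI.
  case: (boolP (x \in I')) => xI'.
    move/forallP: dD => /(_ x); rewrite xI' /= => /existsP [y /andP [yD exy]].
    apply/existsP; exists y; by rewrite inE yD orbT.
  have [_ _ [y yV exy] _] := validP hI xI.
  apply/existsP; exists y; rewrite exy andbT in_setU1.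
  case: (eqVneq y v) => [->|yv] /=; first by rewrite ?eqxx.
  move: xI'; rewrite /I' inE xI /= => /existsPn /(_ y); rewrite !inE yv yV exy; by [].
have := hH (v |: D); rewrite subUset sub1set vV DV' dD2 cardsU1 vD => /(_ isT isT).
move=> h; move: c1 c2 ns ns2 h; clear; rewrite /= => c1 c2 ns ns2 h; lia.
Qed.

Lemma del_step V A I d v : v \in V -> v \notin I -> v \notin A -> v \in nonisol V A ->
  valid V A I -> Hyp V A I d ->
  valid (V :\ v) (A :|: [set w | e v w]) [set u in I | ~~ e v u] /\
  Hyp (V :\ v) (A :|: [set w | e v w]) [set u in I | ~~ e v u] d.
Proof.
move=> vV vI vA vS hI hH.
set I' := [set u in I | _].
split.
  apply/andP; split.
    apply/subsetP => u; rewrite inE => /andP [uI _].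
    have [uV _ _ _] := validP hI uI; rewrite !inE uV andbT.
    by apply: contraNneq vI => <-.
  apply/forallP => u; apply/implyP; rewrite inE => /andP [uI evu].
  have [_ uA [w wV euw] ind] := validP hI uI.
  rewrite !inE (negbTE uA) (negbTE evu) /=; apply/andP; split.
    have wv : w != v by apply/eqP => E; move: evu; rewrite esym -E euw.
    apply/existsP; exists w; by rewrite !inE wV euw wv.
  apply/forallP => x; apply/implyP; rewrite inE => /andP [xI _]; exact: ind.
move=> D DV dD.
have DV' : D \subset V by apply: subset_trans DV (subD1set _ _).
have vD : v \notin D by apply/negP => /(subsetP DV); rewrite setD11.
have c1 := cardsD1 v (nonisol V A); rewrite vS in c1.
have sub : nonisol (V :\ v) (A :|: [set w | e v w]) \subset nonisol V A :\ v.
  apply/subsetP => x; rewrite !inE => /andP [/andP [xv xV] H]; rewrite xv xV /=.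
  case/orP: H => [/orP [-> //|evx]|/existsP [w]].
    apply/orP; right; apply/existsP; exists v; by rewrite vV esym.
  rewrite !inE => /andP [/andP [_ wV] exw].
  apply/orP; right; apply/existsP; exists w; by rewrite wV.
have ns := subset_leq_card sub.
have dD2 : dominates e (v |: D) I.
  apply/forallP => x; apply/implyP => xI.
  case: (boolP (e v x)) => evx.
    apply/existsP; exists v; by rewrite setU11 esym.
  have xI' : x \in I' by rewrite /I' inE xI evx.
  move/forallP: dD => /(_ x); rewrite xI' /= => /existsP [y /andP [yD exy]].
  apply/existsP; exists y; by rewrite inE yD orbT.
have := hH (v |: D); rewrite subUset sub1set vV DV' dD2 cardsU1 vD => /(_ isT isT).
move=> h; move: c1 ns h; clear; rewrite /= => c1 ns h; lia.
Qed.

Lemma Xc_empty V A I : valid V A I -> ~~ [exists v in V, v \in A] ->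
  ~~ [exists v in V, (v \notin I) && [exists w in V, e v w]] -> Xc V A = set0.
Proof.
move=> hI /existsPn nA /existsPn nB; apply/setP => W; rewrite !inE.
apply/negP => /andP [_ /existsP [u /andP [uVW H]]].
move: uVW; rewrite inE => /andP [_ uV].
case/orP: H => [uA|/existsP [w /andP [wVW euw]]].
  by have := nA u; rewrite uV uA.
move: wVW; rewrite inE => /andP [_ wV].
have uI : u \in I.
  have := nB u; rewrite uV /= negb_and negbK => /orP [//|/existsPn /(_ w)].
  by rewrite wV euw.
have wI : w \in I.
  have := nB w; rewrite wV /= negb_and negbK => /orP [//|/existsPn /(_ u)].
  by rewrite uV esym euw.
have [_ _ _ ind] := validP hI uI.
by have := ind w wI; rewrite euw.
Qed.

Lemma combine V A I d v :
  (forall A I d, valid (V :\ v) A I -> Hyp (V :\ v) A I d -> d_collapsible d (Xc (V :\ v) A)) ->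
  v \in V -> v \notin I -> v \in nonisol V A -> valid V A I -> Hyp V A I d ->
  d_collapsible d (del (Xc V A) v) -> d_collapsible d (Xc V A).
Proof.
move=> IH vV vI vS hI hH Hdel.
have [hval hB] := link_step vV vI vS hI hH.
case: (eqVneq (Xc (V :\ v) A) set0) => [L0|Lne].
  rewrite (lk_void (X := Xc V A) (v := v)); first exact: Hdel.
  by rewrite lk_Xc.
case/set0Pn: Lne => W WL.
have [D /andP [DV dD] Dlt] := nonvoid WL hval.
have := hB D DV dD.
case: d hH hB Hdel => [|d'] hH hB Hdel h.
  move: Dlt h; clear; lia.
apply: (LD (L := Xc (V :\ v) A)); last exact: Hdel.
  apply: IH hval _ => D' D'V dD'.
  have := hB D' D'V dD'; clear; lia.
by rewrite lk_Xc.
Qed.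

Lemma main n : forall V A I d, #|V| <= n -> valid V A I -> Hyp V A I d ->
  d_collapsible d (Xc V A).
Proof.
elim: n => [|n IHn] V A I d hV hI hH.
  have V0 : V = set0 by apply/eqP; rewrite -cards_eq0 -leqn0.
  rewrite (@Xc_empty V A I) //; first exact: dcoll_void.
    by apply/existsPn => v; rewrite V0 inE.
  by apply/existsPn => v; rewrite V0 inE.
have IH : forall v, v \in V -> forall A I d, valid (V :\ v) A I -> Hyp (V :\ v) A I d ->
    d_collapsible d (Xc (V :\ v) A).
  move=> v vV A' I' d'; apply: IHn.
  have := cardsD1 v V; rewrite vV => c; move: c hV; clear; rewrite /=; lia.
case: (boolP [exists v in V, v \in A]) => [/existsP [v /andP [vV vA]]|nA].
  have vI : v \notin I by apply/negP => vI; have [_ vA' _ _] := validP hI vI; rewrite vA in vA'.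
  have vS : v \in nonisol V A by rewrite inE vV vA.
  apply: (combine (IH v vV) vV vI vS hI hH).
  rewrite del_Xc_loop //; exact: simplex_coll.
case: (boolP [exists v in V, (v \notin I) && [exists w in V, e v w]]) =>
    [/existsP [v /and3P [vV vI ex]]|nB]; last first.
  rewrite (Xc_empty hI nA nB); exact: dcoll_void.
have vA : v \notin A by apply/negP => vA; move/existsPn: nA => /(_ v); rewrite vV vA.
have vS : v \in nonisol V A by rewrite inE vV ex orbT.
apply: (combine (IH v vV) vV vI vS hI hH).
have [hv hh] := del_step vV vI vA vS hI hH.
rewrite del_Xc //; exact: IH v vV _ _ d hv hh.
Qed.

End Main.


Lemma bigmin_le (I : finType) (P : pred I) (F : I -> nat) x i :
  P i -> \big[minn/x]_(j | P j) F j <= F i.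
Proof.
move=> Pi; rewrite -big_filter.
have : i \in filter P (index_enum I) by rewrite mem_filter Pi mem_index_enum.
elim: (filter P _) => [//|a s IHs]; rewrite inE big_cons => /orP [/eqP ->|/IHs h].
  exact: geq_minl.
exact: leq_trans (geq_minr _ _) h.
Qed.
Unset Implicit Arguments.
Theorem theorem1p2 (T : finType) (e : rel T) :
  simple_graph e -> no_isolated e ->
  d_collapsible (#|T| - indep_dom e - 1) (non_cover_complex e).
Proof.
move=> [esym eirr] noiso.
have -> : non_cover_complex e = Xc e setT set0.
  apply/setP => W; rewrite !inE subsetT /= /is_cover.
  apply/idP/idP.
  - case/forallPn => u /forallPn [v]; rewrite negb_imply negb_or => /and3P [euv uW vW].
    apply/existsP; exists u; rewrite !inE uW /=; apply/existsP; exists v; by rewrite !inE vW euv.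
  - case/existsP => u; rewrite !inE => /andP [uW /existsP [v]]; rewrite !inE => /andP [vW euv].
    move: uW vW => /andP [uW _] /andP [vW _].
    apply/forallPn; exists u; apply/forallPn; exists v; by rewrite euv (negbTE uW) (negbTE vW).
have [I0 I0ind Emax] := @eq_bigmax_cond _ (fun I => independent e I) (gammaA e)
  (ltac:(apply/card_gt0P; exists set0; apply/forallP => x; by rewrite inE)).
have -> : indep_dom e = gammaA e I0 by rewrite /indep_dom -Emax.
apply: (@main _ e esym eirr #|[set: T]| setT set0 I0) => //.
- apply/andP; split; first exact: subsetT.
  apply/forallP => u; apply/implyP => uI; rewrite inE /=.
  have [w ew] := noiso u.
  apply/andP; split; first by apply/existsP; exists w; rewrite inE.
  apply/forallP => w'; apply/implyP => w'I.
  by move/forallP: I0ind => /(_ u); rewrite uI /= => /forallP /(_ w'); rewrite w'I.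
- move=> D _ dD.
  have hg : gammaA e I0 <= #|D| by apply: bigmin_le.
  have -> : nonisol e setT set0 = setT.
    apply/setP => u; rewrite !inE /=; have [w ew] := noiso u.
    by apply/existsP; exists w; rewrite inE.
  rewrite cardsT; move: hg; clear; lia.
Qed.
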